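(* If $V$ is a finite dimensional operator space, then the matrix unit ball of $V$ is operator compact.
   Context: The matrix unit ball of an operator space $V$ is the matrix set $(B_k)_k$ with $B_k$ the closed unit ball of $M_k(V)$. $\mathcal{K}$ denotes the compact operators on $\ell^2$ and $\mathcal{K}(V)=\mathcal{K}\check{\otimes}V$ the operator-space minimal tensor product (completion of $M_\infty(V)$, finitely supported infinite matrices over $V$). $\mathcal{T}$ is the trace class on $\ell^2$ as operator space dual of $\mathcal{K}$, $M_k(\mathcal{T})\cong\mathcal{CB}(\mathcal{K},M_k)$ with norm $\|\cdot\|_{\mathcal{T}}$, $M_\infty\subseteq\mathcal{T}$, and $(\sigma\otimes\mathrm{id})(x)\in M_k(V)$ is the slice map. A matrix set $\boldsymbol{X}=(X_k)$, $X_k\subseteq M_k(V)$, is operator compact if each $X_k$ is closed and there is $x\in\mathcal{K}(V)$ with $X_k\subseteq\overline{\{(\sigma\otimes\mathrm{id})(x):\sigma\in M_k(M_\infty),\|\sigma\|_{\mathcal{T}}\le1\}}$ for all $k$. *)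

(* Defs.v *)
From HB Require Import structures.
From mathcomp Require Import all_boot all_order all_algebra.
From mathcomp Require Import reals.
From mathcomp Require Import complex.
Set Implicit Arguments. Unset Strict Implicit. Unset Printing Implicit Defensive.
Import Order.TTheory GRing.Theory Num.Theory.
Local Open Scope ring_scope.

Section OpSpace.
Variable R : realType.
Local Notation C := (R[i]).
Variable V : vectType C.

Definition contraction m n (a : 'M[C]_(m, n)) : Prop :=
  forall v : 'cV[C]_n,
    \sum_(i < m) Normc.normc ((a *m v) i 0) ^+ 2 <= \sum_(j < n) Normc.normc (v j 0) ^+ 2.

(* a block matrix b = [b i j]_{i,j in I}, each block b i j a J x J complex
   matrix, i.e. an operator on C^I (x) C^J; bcontraction b : operator norm <= 1 *)
Definition bcontraction (I J : finType) (b : I -> I -> J -> J -> C) : Prop :=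
  forall v : I -> J -> C,
    \sum_(i : I) \sum_(p : J) Normc.normc (\sum_(j : I) \sum_(q : J) b i j p q * v j q) ^+ 2
    <= \sum_(j : I) \sum_(q : J) Normc.normc (v j q) ^+ 2.

Definition mxscale k (c : C) (x : 'M[V]_k) : 'M[V]_k := map_mx (fun v => c *: v) x.

Definition mxVmul m n (al : 'M[C]_(m, n)) (x : 'M[V]_n) (be : 'M[C]_(n, m)) : 'M[V]_m :=
  \matrix_(i < m, j < m) \sum_(p < n) \sum_(q < n) (al i p * be q j) *: x p q.

(* Ruan's axioms: nrm k is the norm on M_k(V) *)
Definition is_operator_space (nrm : forall k, 'M[V]_k -> R) : Prop :=
  (forall k (x : 'M[V]_k), 0 <= nrm k x) /\
  [/\ (forall k (x : 'M[V]_k), nrm k x = 0 -> x = 0),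
      (forall k (c : C) (x : 'M[V]_k), nrm k (mxscale c x) = Normc.normc c * nrm k x),
      (forall k (x y : 'M[V]_k), nrm k (x + y) <= nrm k x + nrm k y),
      (forall m n (al : 'M[C]_(m, n)) (x : 'M[V]_n) (be : 'M[C]_(n, m)),
          contraction al -> contraction be -> nrm m (mxVmul al x be) <= nrm n x) &
      (forall m n (x : 'M[V]_m) (y : 'M[V]_n),
          nrm (m + n)%N (block_mx x 0 0 y) = Num.max (nrm m x) (nrm n y))].

Definition mx_closure (nrm : forall k, 'M[V]_k -> R) k (S : 'M[V]_k -> Prop)
    (y : 'M[V]_k) : Prop :=
  forall e : R, 0 < e -> exists2 s, S s & nrm k (y - s) < e.

Definition mx_closed (nrm : forall k, 'M[V]_k -> R) k (S : 'M[V]_k -> Prop) : Prop :=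
  forall y, mx_closure nrm S y -> S y.

Definition mx_converges (nrm : forall k, 'M[V]_k -> R) k (u : nat -> 'M[V]_k)
    (y : 'M[V]_k) : Prop :=
  forall e : R, 0 < e -> exists M, forall m, (M <= m)%N -> nrm k (u m - y) < e.

Definition fsupp (T : zmodType) (n : nat) (f : nat -> nat -> T) : Prop :=
  forall p q, (n <= p)%N || (n <= q)%N -> f p q = 0.

Definition trunc (N : nat) (x : nat -> nat -> V) : 'M[V]_N := \matrix_(p < N, q < N) x p q.

(* a sequence in M_infty(V) (finitely supported), Cauchy for the norms of
   M_infty(V) = union of the M_N(V); such sequences represent elements of
   K(V) = completion of M_infty(V) *)
Definition KV_seq (nrm : forall k, 'M[V]_k -> R) (xs : nat -> nat -> nat -> V) : Prop :=
  (forall m, exists N, fsupp N (xs m)) /\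
  (forall e : R, 0 < e -> exists M, forall m m' N, (M <= m)%N -> (M <= m')%N ->
      nrm N (trunc N (xs m) - trunc N (xs m')) < e).

(* sigma in M_k(M_infty): sigma i j is a finitely supported infinite complex
   matrix.  ||sigma||_T <= 1 means the associated map
   phi_sigma : K -> M_k, a |-> [ <sigma i j, a> ]_{i,j},
   <s, a> = sum_{p,q} s p q * a p q, is completely contractive.  The
   amplifications are tested on the finitely supported (hence norm-dense in
   the unit ball) elements a of M_m(K), i.e. a in M_m(M_N). *)
Definition Tnorm_le1 k (sigma : 'I_k -> 'I_k -> nat -> nat -> C) : Prop :=
  forall (m N : nat) (a : 'I_m -> 'I_m -> 'I_N -> 'I_N -> C),
    bcontraction a ->
    bcontraction (fun (i j : 'I_m) (r s : 'I_k) =>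
                    \sum_(p < N) \sum_(q < N) sigma r s p q * a i j p q).

(* slice map (sigma (x) id)(x) in M_k(V) for sigma supported in {0..n-1}^2 *)
Definition slice k (n : nat) (sigma : 'I_k -> 'I_k -> nat -> nat -> C)
    (x : nat -> nat -> V) : 'M[V]_k :=
  \matrix_(i < k, j < k) \sum_(p < n) \sum_(q < n) sigma i j p q *: x p q.

Definition operator_compact (nrm : forall k, 'M[V]_k -> R)
    (X : forall k, 'M[V]_k -> Prop) : Prop :=
  (forall k, mx_closed nrm (X k)) /\
  exists xs : nat -> nat -> nat -> V, KV_seq nrm xs /\
    forall k (y : 'M[V]_k), X k y ->
      mx_closure nrm
        (fun z => exists n (sigma : 'I_k -> 'I_k -> nat -> nat -> C),
             [/\ (forall i j, fsupp n (sigma i j)), Tnorm_le1 sigma &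
                 mx_converges nrm (fun m => slice n sigma (xs m)) z])
        y.

Definition matrix_unit_ball (nrm : forall k, 'M[V]_k -> R) : forall k, 'M[V]_k -> Prop :=
  fun k x => nrm k x <= 1.

End OpSpace.

(* Main.v *)
Require Import Defs.
From HB Require Import structures.
From mathcomp Require Import all_boot all_order all_algebra.
From mathcomp Require Import reals.
From mathcomp Require Import complex.
From mathcomp Require Import all_classical topology normedtype derive.
From mathcomp Require Import matrix_normedtype.
From mathcomp Require Import ring lra.
Import Order.TTheory GRing.Theory Num.Theory numFieldNormedType.Exports.
Local Open Scope ring_scope.

Section Analysis.
Local Open Scope classical_set_scope.
Lemma mx_norm_entry (R : realType) m n (x : 'M[R]_(m, n)) i j : `|x i j| <= `|x|.
Proof. have -> : `|x| = mx_norm x by []. rewrite mx_normrE. exact: (le_bigmax _ (fun ij : 'I_m * 'I_n => `|x ij.1 ij.2|) (i, j)). Qed.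

Lemma lip_cont (R : realType) n (f : 'rV[R]_n -> R) L :
  0 <= L -> (forall a b, `|f a - f b| <= L * `|a - b|) -> continuous f.
Proof.
move=> L0 H x; apply/(@cvgrPdist_lt _ _ _ (nbhs x) (nbhs_filter x)) => e e0.
have L1 : 0 < L + 1 by rewrite ltr_wpDl.
near=> y.
have : `|x - y| < e / (L + 1).
  near: y. apply: cvgr_dist_lt; [exact: cvg_id | by rewrite divr_gt0].
move=> hxy; apply: (le_lt_trans (H x y)).
apply: (@le_lt_trans _ _ ((L + 1) * `|x - y|)).
  by rewrite ler_wpM2r // lerDl.
by rewrite -ltr_pdivlMl // mulrC.
Unshelve. all: by end_near. Qed.

Lemma norm_equiv (R : realType) n (f : 'rV[R]_n -> R) L :
  0 <= L ->
  (forall a b, f (a + b) <= f a + f b) ->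
  (forall (t : R) a, f (t *: a) = `|t| * f a) ->
  (forall a, f a <= L * `|a|) ->
  (forall a, f a = 0 -> a = 0) ->
  exists2 c, 0 < c & forall a, c * `|a| <= f a.
Proof.
move=> L0 fD fZ fL f0.
have fN a : f (- a) = f a by rewrite -scaleN1r fZ normrN1 mul1r.
have f00 : f 0 = 0 by rewrite -[0 : 'rV_n](scale0r 0) fZ normr0 mul0r.
have fge0 a : 0 <= f a.
  by have := fD a (- a); rewrite subrr f00 fN; lra.
have h1 a' b' : f a' - f b' <= L * `|a' - b'|.
  have := fD (a' - b') b'; rewrite subrK => h.
  have := fL (a' - b'); lra.
have fB a b : `|f a - f b| <= L * `|a - b|.
  rewrite ler_norml h1 andbT.
  have := h1 b a; rewrite distrC; lra.
have fc := @lip_cont _ _ f L L0 fB.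
case: n f fD fZ fL f0 fN f00 fge0 h1 fB fc => [|n] f fD fZ fL f0 fN f00 fge0 h1 fB fc.
  exists 1 => // a; have -> : a = 0 by apply/rowP => -[].
  by rewrite normr0 mulr0.
pose A := [set a : 'rV[R]_n.+1 | `|a| = 1].
have A0 : A !=set0.
  pose a0 : 'rV[R]_n.+1 := delta_mx 0 ord0.
  have a00 : a0 != 0.
    apply/eqP => /matrixP /(_ 0 ord0); rewrite !mxE !eqxx /=.
    by move=> /eqP; rewrite oner_eq0.
  exists (`|a0|^-1 *: a0); rewrite /A /= normrZ normfV normr_id mulVf //.
  by rewrite normr_eq0.
have cA : compact A.
  apply: bounded_closed_compact.
    by exists 1; split => // M M1 a /= ->; exact: ltW.
  have -> : A = Num.norm @^-1` [set 1] by [].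
  apply: preimage_closed; last exact: closed_eq.
  by move=> x _; apply: norm_continuous.
have [c0 c0A hmin] := EVT_min_rV A0 cA (continuous_subspaceT fc).
have c01 : `|c0| = 1 by move: c0A; rewrite inE.
have fc0 : 0 < f c0.
  rewrite lt_def fge0 andbT; apply/eqP => /f0 h.
  by move: c01; rewrite h normr0 => /eqP; rewrite eq_sym oner_eq0.
exists (f c0) => // a.
have [->|a0] := eqVneq a 0; first by rewrite normr0 mulr0.
have na : 0 < `|a| by rewrite normr_gt0.
have := hmin (`|a|^-1 *: a).
rewrite inE /A /= normrZ normfV normr_id mulVf ?normr_eq0 // => /(_ erefl).
rewrite fZ normfV normr_id => h.
by rewrite -ler_pdivlMr // mulrC.
Qed.

End Analysis.

Section Cx.
Variable R : realType.
Local Notation C := (R[i]).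
Local Notation normc := (@Normc.normc R).

Lemma normc_ge0 (z : C) : 0 <= normc z.
Proof. by case: z => a b; rewrite /= sqrtr_ge0. Qed.

Lemma normc_le (x y : R) : normc (x +i* y)%C <= `|x| + `|y|.
Proof.
rewrite /=.
have h : x ^+ 2 + y ^+ 2 <= (`|x| + `|y|) ^+ 2.
  rewrite sqrrD !real_normK ?num_real //.
  have : 0 <= `|x| * `|y| *+ 2 by rewrite mulrn_wge0 // mulr_ge0.
  lra.
apply: (le_trans (ler_wsqrtr h)).
by rewrite sqrtr_sqr ger0_norm // addr_ge0.
Qed.

Lemma normc_sum (I : finType) (z : I -> C) : normc (\sum_i z i) <= \sum_i normc (z i).
Proof.
elim/big_ind2: _ => //; first by rewrite Normc.normc0.
by move=> x1 x2 y1 y2 h1 h2; apply: le_trans (le_normcD _ _) _; apply: lerD.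
Qed.

Lemma real_CS (I : finType) (a b : I -> R) :
  (\sum_i a i * b i) ^+ 2 <= (\sum_i a i ^+ 2) * (\sum_i b i ^+ 2).
Proof.
have H : 0 <= \sum_i \sum_j (a i * b j - a j * b i) ^+ 2.
  by apply: sumr_ge0 => i _; apply: sumr_ge0 => j _; apply: sqr_ge0.
have e1 : (\sum_i a i ^+ 2) * (\sum_i b i ^+ 2) = \sum_i \sum_j a i ^+ 2 * b j ^+ 2.
  by rewrite mulr_suml; apply: eq_bigr => i _; rewrite mulr_sumr.
have e3 : (\sum_i a i * b i) ^+ 2 = \sum_i \sum_j (a i * b i) * (a j * b j).
  by rewrite expr2 mulr_suml; apply: eq_bigr => i _; rewrite mulr_sumr.
have e2 : \sum_i \sum_j a j ^+ 2 * b i ^+ 2 = \sum_i \sum_j a i ^+ 2 * b j ^+ 2.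
  by rewrite exchange_big.
have E : \sum_i \sum_j (a i * b j - a j * b i) ^+ 2 =
   \sum_i \sum_j a i ^+ 2 * b j ^+ 2 + \sum_i \sum_j a j ^+ 2 * b i ^+ 2
   - 2 * \sum_i \sum_j (a i * b i) * (a j * b j).
  rewrite mulr_sumr -big_split -sumrB /=; apply: eq_bigr => i _.
  rewrite mulr_sumr -big_split -sumrB /=; apply: eq_bigr => j _.
  ring.
move: H; rewrite E e2 -e1 -e3; lra.
Qed.

Lemma cx_CS (I : finType) (u v : I -> C) :
  normc (\sum_i u i * v i) ^+ 2 <= (\sum_i normc (u i) ^+ 2) * (\sum_i normc (v i) ^+ 2).
Proof.
have h1 : normc (\sum_i u i * v i) <= \sum_i normc (u i) * normc (v i).
  apply: le_trans (normc_sum _ (fun i => u i * v i)) _; apply: ler_sum => i _; by rewrite Normc.normcM.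
apply: le_trans (real_CS _ (fun i => normc (u i)) (fun i => normc (v i))).
rewrite !expr2; apply: ler_pM => //; exact: normc_ge0.
Qed.

Lemma sum_sq_le (I : finType) (z : I -> C) :
  normc (\sum_i z i) ^+ 2 <= #|I|%:R * \sum_i normc (z i) ^+ 2.
Proof.
have := cx_CS _ (fun=> 1) z.
under eq_bigr do rewrite mul1r.
by rewrite Normc.normc1 expr1n sumr_const.
Qed.

Definition bnd (I : finType) (K : R) (M : I -> I -> C) :=
  forall v : I -> C, \sum_i normc (\sum_j M i j * v j) ^+ 2 <= K * \sum_j normc (v j) ^+ 2.

Arguments bnd {I}.

Lemma kron (I J : finType) (B : I -> I -> C) (A : J -> J -> C) K :
  bnd 1 B -> bnd K A -> forall v : I -> J -> C,
  \sum_i \sum_p normc (\sum_j \sum_q (B i j * A p q) * v j q) ^+ 2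
    <= K * \sum_j \sum_q normc (v j q) ^+ 2.
Proof.
move=> hB hA v.
pose u j p := \sum_q A p q * v j q.
have E i p : \sum_j \sum_q (B i j * A p q) * v j q = \sum_j B i j * u j p.
  by apply: eq_bigr => j _; rewrite /u mulr_sumr; apply: eq_bigr => q _; rewrite mulrA.
under eq_bigr do under eq_bigr do rewrite E.
rewrite exchange_big /=.
apply: (@le_trans _ _ (\sum_p \sum_j normc (u j p) ^+ 2)).
  by apply: ler_sum => p _; have := hB (fun j => u j p); rewrite mul1r.
rewrite exchange_big /= mulr_sumr; apply: ler_sum => j _; exact: hA.
Qed.

Lemma bsum (I J P : finType) (Bs : P -> I -> I -> J -> J -> C) K :
  (forall p (v : I -> J -> C), \sum_i \sum_r normc (\sum_j \sum_s Bs p i j r s * v j s) ^+ 2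
      <= K * \sum_j \sum_s normc (v j s) ^+ 2) ->
  forall v : I -> J -> C,
  \sum_i \sum_r normc (\sum_j \sum_s (\sum_p Bs p i j r s) * v j s) ^+ 2
      <= (#|P|%:R * #|P|%:R * K) * \sum_j \sum_s normc (v j s) ^+ 2.
Proof.
move=> hB v.
have E i r : \sum_j \sum_s (\sum_p Bs p i j r s) * v j s
    = \sum_p \sum_j \sum_s Bs p i j r s * v j s.
  rewrite [RHS]exchange_big /=; apply: eq_bigr => j _.
  rewrite [RHS]exchange_big /=; apply: eq_bigr => s _.
  by rewrite mulr_suml.
under eq_bigr do under eq_bigr do rewrite E.
apply: (@le_trans _ _ (\sum_i \sum_r #|P|%:R * \sum_p
           normc (\sum_j \sum_s Bs p i j r s * v j s) ^+ 2)).
  by apply: ler_sum => i _; apply: ler_sum => r _; apply: sum_sq_le.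
under eq_bigr do rewrite -mulr_sumr.
rewrite -mulr_sumr -!mulrA ler_wpM2l //.
under eq_bigr do rewrite exchange_big /=.
rewrite exchange_big /=.
apply: (@le_trans _ _ (\sum_(p : P) K * \sum_j \sum_s normc (v j s) ^+ 2)).
  by apply: ler_sum => p _; apply: hB.
by rewrite sumr_const mulr_natl.
Qed.

Lemma compress (m N : nat) (a : 'I_m -> 'I_m -> 'I_N -> 'I_N -> C) (p : 'I_N) :
  bcontraction a -> bnd 1 (fun i j => a i j p p).
Proof.
move=> ha v.
have := ha (fun j q => if q == p then v j else 0).
have E i p' : \sum_j \sum_q a i j p' q * (if q == p then v j else 0) = \sum_j a i j p' p * v j.
  apply: eq_bigr => j _; rewrite (bigD1 p) //= eqxx big1 ?addr0 //.
  by move=> q /negbTE ->; rewrite mulr0.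
under eq_bigr do under eq_bigr do rewrite E.
have E2 j : \sum_q normc (if q == p then v j else 0) ^+ 2 = normc (v j) ^+ 2.
  rewrite (bigD1 p) //= eqxx big1 ?addr0 //.
  by move=> q /negbTE ->; rewrite Normc.normc0 expr0n.
under [X in _ <= X -> _]eq_bigr do rewrite E2.
rewrite mul1r; apply: le_trans.
apply: ler_sum => i _; rewrite (bigD1 p) //= lerDl.
by apply: sumr_ge0 => ? _; apply: sqr_ge0.
Qed.

End Cx.

Section OS.
Variables (R : realType) (V : vectType R[i]) (nrm : forall k, 'M[V]_k -> R).
Hypothesis Hos : is_operator_space nrm.
Local Notation C := (R[i]).
Local Notation normc := (@Normc.normc R).

Lemma nrm_ge0 k (x : 'M[V]_k) : 0 <= nrm k x.
Proof. by case: Hos => h _; apply: h. Qed.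
Lemma nrm_eq0 k (x : 'M[V]_k) : nrm k x = 0 -> x = 0.
Proof. by case: Hos => _ [h _ _ _ _]; apply: h. Qed.
Lemma nrm_scale k (c : C) (x : 'M[V]_k) : nrm k (mxscale c x) = normc c * nrm k x.
Proof. by case: Hos => _ [_ h _ _ _]; apply: h. Qed.
Lemma nrm_tri k (x y : 'M[V]_k) : nrm k (x + y) <= nrm k x + nrm k y.
Proof. by case: Hos => _ [_ _ h _ _]; apply: h. Qed.
Lemma nrm_ruan m n (al : 'M[C]_(m, n)) (x : 'M[V]_n) (be : 'M[C]_(n, m)) :
  Defs.contraction al -> Defs.contraction be -> nrm m (mxVmul al x be) <= nrm n x.
Proof. by case: Hos => _ [_ _ _ h _]; apply: h. Qed.

Lemma nrm0 k : nrm k (0 : 'M[V]_k) = 0.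
Proof.
have -> : (0 : 'M[V]_k) = mxscale 0 0 by apply/matrixP => i j; rewrite !mxE scale0r.
by rewrite nrm_scale Normc.normc0 mul0r.
Qed.

Lemma nrm_sum k (I : finType) (F : I -> 'M[V]_k) : nrm k (\sum_i F i) <= \sum_i nrm k (F i).
Proof.
elim/big_ind2: _ => //; first by rewrite nrm0.
by move=> x1 x2 y1 y2 h1 h2; apply: le_trans (nrm_tri _ _ _) _; apply: lerD.
Qed.

Lemma mxscale_const (c : C) (v : V) : mxscale c (const_mx v : 'M[V]_1) = const_mx (c *: v).
Proof. by apply/matrixP => i j; rewrite !mxE. Qed.

Lemma normc_real (t : R) : normc (t%:C)%C = `|t|.
Proof. by rewrite /= expr0n /= addr0 sqrtr_sqr. Qed.

Let d := \dim (fullv : {vspace V}).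
Let bs := vbasis (fullv : {vspace V}).
Definition phi (a : 'rV[R]_(d + d)) : V :=
  \sum_(l < d) ((a 0 (lshift d l)) +i* (a 0 (rshift d l)))%C *: bs`_l.

Lemma cplx_add (x y x' y' : R) : ((x + x') +i* (y + y'))%C = (x +i* y)%C + (x' +i* y')%C.
Proof. by []. Qed.

Lemma cplx_scale (t x y : R) : ((t * x) +i* (t * y))%C = (t%:C)%C * (x +i* y)%C.
Proof. by rewrite /real_complex_def; simpc. Qed.

Lemma const_sum (I : finType) (F : I -> V) :
  (const_mx (\sum_i F i) : 'M[V]_1) = \sum_i const_mx (F i).
Proof. by apply/matrixP => i j; rewrite !mxE summxE; apply: eq_bigr => ? _; rewrite mxE. Qed.

Lemma coord_bound : exists2 Cst, 0 < Cst &
  forall (l : 'I_d) (v : V), normc (coord bs l v) <= Cst * nrm 1 (const_mx v).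
Proof.
pose f a := nrm 1 (const_mx (phi a)).
pose L := \sum_(l < d) 2 * nrm 1 (const_mx bs`_l).
have L0 : 0 <= L by apply: sumr_ge0 => l _; rewrite mulr_ge0 // nrm_ge0.
have phiD a b : phi (a + b) = phi a + phi b.
  by rewrite /phi -big_split; apply: eq_bigr => l _; rewrite !mxE cplx_add scalerDl.
have phiZ t a : phi (t *: a) = (t%:C)%C *: phi a.
  by rewrite /phi scaler_sumr; apply: eq_bigr => l _; rewrite !mxE cplx_scale scalerA.
have constD u v : (const_mx (u + v) : 'M[V]_1) = const_mx u + const_mx v.
  by apply/matrixP => i j; rewrite !mxE.
have fD a b : f (a + b) <= f a + f b by rewrite /f phiD constD; apply: nrm_tri.
have fZ t a : f (t *: a) = `|t| * f a.
  by rewrite /f phiZ -mxscale_const nrm_scale normc_real.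
have fL a : f a <= L * `|a|.
  rewrite /f /phi const_sum; apply: le_trans (nrm_sum _ _ _) _.
  rewrite /L mulr_suml; apply: ler_sum => l _.
  rewrite -mxscale_const nrm_scale [_ * `|a|]mulrC mulrA ler_wpM2r ?nrm_ge0 //.
  apply: le_trans (normc_le _ _ _) _.
  by rewrite mulrC mulr2n mulrDl mul1r; apply: lerD; apply: mx_norm_entry.
have f0 a : f a = 0 -> a = 0.
  move=> /nrm_eq0 /matrixP /(_ 0 0); rewrite !mxE => h0.
  have hc l : ((a 0 (lshift d l)) +i* (a 0 (rshift d l)))%C = 0.
    have := coord_sum_free (fun l => ((a 0 (lshift d l)) +i* (a 0 (rshift d l)))%C) l
      (basis_free (vbasisP fullv)).
    by rewrite -/bs -/(phi a) h0 linear0.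
  apply/rowP => i; rewrite mxE; case: (split_ordP i) => l ->.
    by have := hc l; case.
  by have := hc l; case.
have [c c0 hc] := @norm_equiv _ _ f L L0 fD fZ fL f0.
exists (2 / c); first by rewrite divr_gt0.
move=> l v.
pose a : 'rV[R]_(d + d) := row_mx (\row_l complex.Re (coord bs l v)) (\row_l complex.Im (coord bs l v)).
have pa : phi a = v.
  rewrite [RHS](coord_vbasis (memvf v)) -/bs /phi; apply: eq_bigr => l' _.
  rewrite row_mxEl row_mxEr !mxE; congr (_ *: _).
  by case: (coord bs l' v).
have := hc a; rewrite /f pa => h.
have e : coord bs l v = ((a 0 (lshift d l)) +i* (a 0 (rshift d l)))%C.
  by rewrite row_mxEl row_mxEr !mxE; case: (coord bs l v).
rewrite e; apply: le_trans (normc_le _ _ _) _.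
apply: (@le_trans _ _ (2 * `|a|)).
  by rewrite mulr2n mulrDl mul1r; apply: lerD; apply: mx_norm_entry.
by rewrite -mulrA ler_wpM2l // ler_pdivlMl // mulrC.
Qed.

Lemma normc_conj (z : C) : normc (conjc z) = normc z.
Proof. by case: z => a b; rewrite /= sqrrN. Qed.

Lemma normc_divr (z : C) (p : R) : 0 < p -> normc (z / (p%:C)%C) = normc z / p.
Proof. by move=> p0; rewrite Normc.normcM Normc.normcV normc_real gtr0_norm. Qed.

Lemma conj_mul (z : C) : conjc z * z = ((normc z ^+ 2)%:C)%C.
Proof.
case: z => a b; rewrite /= sqr_sqrtr ?addr_ge0 ?sqr_ge0 //.
rewrite /real_complex_def; simpc; congr (_ +i* _)%C; ring.
Qed.

Lemma const_mx11 (M : 'M[V]_1) : const_mx (M 0 0) = M.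
Proof. by apply/matrixP => i j; rewrite !ord1 mxE. Qed.

Lemma normc_eq0sq (z : C) : normc z ^+ 2 = 0 -> z = 0.
Proof. by move=> /eqP; rewrite expf_eq0 /= => /eqP /Normc.eq0_normc. Qed.

Lemma coord_mx_bnd Cst :
  (forall (l : 'I_d) (v : V), normc (coord bs l v) <= Cst * nrm 1 (const_mx v)) ->
  0 <= Cst -> forall k (y : 'M[V]_k), nrm k y <= 1 -> forall l : 'I_d,
  @bnd R _ (Cst ^+ 2) (fun r s => coord bs l (y r s)).
Proof.
move=> hC C0 k y hy l v.
set A := fun r s => coord bs l (y r s).
pose u r := \sum_s A r s * v s.
rewrite -/(u _).
set t := \sum_r normc (u r) ^+ 2.
set X := \sum_s normc (v s) ^+ 2.
have X0 : 0 <= X by apply: sumr_ge0 => s _; apply: sqr_ge0.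
have [tle0|tgt0] := lerP t 0.
  by apply: le_trans tle0 _; rewrite mulr_ge0 // sqr_ge0.
have Xgt0 : 0 < X.
  rewrite lt_def X0 andbT; apply/eqP => HX.
  have hX := psumr_eq0P (fun s _ => sqr_ge0 _) HX.
  have v0 s : v s = 0 by apply: normc_eq0sq; apply: hX.
  move: tgt0; rewrite /t big1 ?ltxx // => r _.
  by rewrite /u big1 ?Normc.normc0 ?expr0n // => s _; rewrite v0 mulr0.
pose st := Num.sqrt t; pose sX := Num.sqrt X.
have st0 : 0 < st by rewrite sqrtr_gt0.
have sX0 : 0 < sX by rewrite sqrtr_gt0.
pose eta : 'M[C]_(1, k) := \matrix_(i, r) (conjc (u r) / (st%:C)%C).
pose xi : 'M[C]_(k, 1) := \matrix_(s, j) (v s / (sX%:C)%C).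
have ceta : Defs.contraction eta.
  move=> w; rewrite big_ord1 mxE.
  apply: le_trans (cx_CS _ _ (fun r => eta 0 r) (fun r => w r 0)) _.
  have -> : \sum_r normc (eta 0 r) ^+ 2 = 1.
    under eq_bigr do rewrite mxE normc_divr // normc_conj expr_div_n.
    rewrite -mulr_suml -/t sqr_sqrtr ?divff //; first by rewrite gt_eqF.
    exact: ltW.
  by rewrite mul1r.
have cxi : Defs.contraction xi.
  move=> w; rewrite big_ord1.
  under eq_bigr do rewrite mxE big_ord1 mxE Normc.normcM normc_divr // exprMn expr_div_n.
  rewrite -mulr_suml -mulr_suml -/X sqr_sqrtr ?divff ?mul1r //; first by rewrite gt_eqF.
pose M := mxVmul eta y xi.
have hM : nrm 1 M <= 1 by apply: le_trans hy; apply: nrm_ruan.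
have := hC l (M 0 0); rewrite const_mx11 => hb.
have eM : coord bs l (M 0 0) = (((t / (st * sX)))%:C)%C.
  rewrite fmorph_div rmorph_sum /= /M mxE linear_sum /=.
  rewrite (eq_bigr (fun p => conjc (u p) * u p / (((st * sX))%:C)%C)); last first.
    move=> p _; rewrite linear_sum /= {2}/u mulr_sumr mulr_suml.
    apply: eq_bigr => q _; rewrite linearZ /= !mxE rmorphM invfM /A.
    ring.
  rewrite -mulr_suml; congr (_ / _); apply: eq_bigr => p _; exact: conj_mul.
move: hb; rewrite eM normc_real ger0_norm; last first.
  by rewrite divr_ge0 // ?mulr_ge0 // ltW.
move=> hb.
have h0 : t / (st * sX) <= Cst.
  by apply: le_trans hb _; rewrite ler_piMr // nrm_ge0.
have tst : t = st * st by rewrite -expr2 sqr_sqrtr // ltW.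
have h1 : st <= Cst * sX.
  move: h0; rewrite {1}tst invfM mulrA mulfK ?gt_eqF // ler_pdivrMr //.
have := ler_pM (ltW st0) (ltW st0) h1 h1.
rewrite -tst mulrACA -!expr2 sqr_sqrtr //.
Qed.


Lemma sel_N (T : zmodType) N (l : nat) (G : 'I_N -> 'I_N -> T) :
  \sum_(p < N) \sum_(q < N) (if (l == p) && (l == q) then G p q else 0)
  = if insub l is Some p0 then G p0 p0 else 0.
Proof.
case: insubP => [p0 _ hp0|hl].
  rewrite (bigD1 p0) //= (bigD1 p0) //= hp0 eqxx /= big1 ?addr0; last first.
    move=> q hq; rewrite -hp0; have -> : (val p0 == val q) = false by apply/negbTE; rewrite eq_sym. by [].
  rewrite big1 ?addr0 // => p hp; apply: big1 => q _.
  by rewrite -hp0 (_ : (val p0 == p) = false) // eq_sym; apply/negbTE.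
apply: big1 => p _; apply: big1 => q _.
case: eqP => //= hlp; move: hl; rewrite hlp ltn_ord //.
Qed.

Lemma sel_d (T : zmodType) (F : 'I_d -> T) (p q : 'I_d) :
  \sum_(l < d | (l == p :> nat) && (l == q :> nat)) F l = if p == q then F p else 0.
Proof.
case: eqP => [<-|ne].
  rewrite (big_pred1 p) // => l; rewrite andbb /=; done.
rewrite big_pred0 // => l; apply/negbTE/negP => /andP [/eqP h1 /eqP h2].
by apply: ne; apply: val_inj; rewrite /= -h1 -h2.
Qed.

Lemma bnd_scale (I : finType) K (M : I -> I -> C) (lam : C) :
  @bnd R I K M -> @bnd R I (K * normc lam ^+ 2) (fun r s => M r s * lam).
Proof.
move=> hM v.
have E r : \sum_s M r s * lam * v s = lam * \sum_s M r s * v s.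
  by rewrite mulr_sumr; apply: eq_bigr => s _; ring.
under eq_bigr do rewrite E Normc.normcM exprMn.
have h := hM v; have h2 : 0 <= normc lam ^+ 2 by apply: sqr_ge0. rewrite -mulr_sumr; nra.
Qed.

Lemma sig_Tnorm Cst c k (y : 'M[V]_k) :
  (forall (l : 'I_d) (v : V), normc (coord bs l v) <= Cst * nrm 1 (const_mx v)) ->
  0 <= Cst -> nrm k y <= 1 -> 0 < c -> d%:R * Cst <= c ->
  Tnorm_le1 (fun r s p q => \sum_(l < d | (l == p :> nat) && (l == q :> nat))
                             coord bs l (y r s) / (c%:C)%C).
Proof.
move=> hC C0 hy c0 hc m N a ha.
pose Bl (l : 'I_d) (i j : 'I_m) : C :=
  if (insub (val l) : option 'I_N) is Some p0 then a i j p0 p0 else 0.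
pose Al (l : 'I_d) (r s : 'I_k) : C := coord bs l (y r s) * ((c%:C)%C)^-1.
have Eb i j r s : \sum_(p < N) \sum_(q < N)
    (\sum_(l < d | (l == p :> nat) && (l == q :> nat)) coord bs l (y r s) / (c%:C)%C) * a i j p q
    = \sum_l Bl l i j * Al l r s.
  under eq_bigr => p _ do under eq_bigr => q _ do rewrite mulr_suml big_mkcond /=.
  under eq_bigr => p _ do rewrite exchange_big /=.
  rewrite exchange_big /=; apply: eq_bigr => l _.
  have := @sel_N _ N (val l) (fun p q => coord bs l (y r s) / (c%:C)%C * a i j p q).
  move=> ->; rewrite /Bl /Al; case: (insub (val l)) => [p0|]; last by rewrite mul0r.
  by rewrite mulrC.
move=> v.
under eq_bigr => i _ do under eq_bigr => r _ do under eq_bigr => j _ do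
  under eq_bigr => s _ do rewrite Eb.
set K := Cst ^+ 2 * normc ((c%:C)%C)^-1 ^+ 2.
apply: le_trans (@bsum R _ _ _ (fun l i j r s => Bl l i j * Al l r s) K _ v) _.
  move=> l w; apply: kron.
    rewrite /Bl; case: (insub (val l)) => [p0|]; first exact: compress.
    move=> w'; under eq_bigr do under eq_bigr do rewrite mul0r.
    rewrite big1 ?mul1r; first by apply: sumr_ge0 => ? _; apply: sqr_ge0.
    by move=> ? _; rewrite big1 // Normc.normc0 expr0n.
  exact: (bnd_scale _ _ _ ((c%:C)%C)^-1 (@coord_mx_bnd Cst hC C0 k y hy l)).
rewrite card_ord -[X in _ <= X]mul1r; apply: ler_wpM2r.
  by apply: sumr_ge0 => ? _; apply: sumr_ge0 => ? _; apply: sqr_ge0.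
rewrite /K Normc.normcV normc_real ger0_norm ?(ltW c0) //.
have q1 : d%:R * Cst / c <= 1 by rewrite ler_pdivrMr // mul1r.
have q0 : 0 <= d%:R * Cst / c by rewrite divr_ge0 // ?mulr_ge0 // ltW.
have -> : d%:R * d%:R * (Cst ^+ 2 * c^-1 ^+ 2) = (d%:R * Cst / c) ^+ 2 by ring.
by rewrite expr_le1.
Qed.

Lemma main_thm : operator_compact nrm (matrix_unit_ball nrm).
Proof.
split.
  move=> k y hcl; rewrite /matrix_unit_ball.
  case: (lerP (nrm k y) 1) => // h.
  have e0 : 0 < nrm k y - 1 by rewrite subr_gt0.
  have [s hs hys] := hcl (nrm k y - 1) e0.
  have := nrm_tri k s (y - s); rewrite addrC subrK.
  move: hs; rewrite /matrix_unit_ball => hs; lra.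
have [Cst Cpos hC] := coord_bound.
pose c := d%:R * Cst + 1.
have c0 : 0 < c by rewrite ltr_wpDl // mulr_ge0 // ltW.
have hc : d%:R * Cst <= c by rewrite lerDl.
pose x0 := fun p q : nat => \sum_(l < d | (l == p :> nat) && (l == q :> nat)) (c%:C)%C *: bs`_l.
exists (fun _ => x0); split.
  split.
    move=> m; exists d => p q hpq; apply: big1 => l /andP [/eqP hp /eqP hq].
    by move: hpq; rewrite -hp -hq leqNgt ltn_ord.
  by move=> e e0; exists 0%N => m m' N _ _; rewrite subrr nrm0.
move=> k y hy e e0; exists y; last by rewrite subrr nrm0.
pose sig := fun (r s : 'I_k) (p q : nat) =>
  \sum_(l < d | (l == p :> nat) && (l == q :> nat)) coord bs l (y r s) / (c%:C)%C.
exists d, sig; split.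
- move=> i j p q hpq; apply: big1 => l /andP [/eqP hp /eqP hq].
  by move: hpq; rewrite -hp -hq leqNgt ltn_ord.
- exact: (@sig_Tnorm Cst c k y hC (ltW Cpos) hy c0 hc).
have -> : slice d sig x0 = y.
  apply/matrixP => r s; rewrite mxE.
  rewrite [RHS](coord_vbasis (memvf (y r s))) -/bs; apply: eq_bigr => p _.
  rewrite (bigD1 p) //= big1 ?addr0; last first.
    by move=> q hq; rewrite /sig sel_d eq_sym (negbTE hq) scale0r.
  rewrite /sig /x0 !sel_d eqxx scalerA divfK //.
  by rewrite -(rmorph0 (real_complex R)) (inj_eq (@complexI R)) gt_eqF.
by move=> e' e'0; exists 0%N => m _; rewrite subrr nrm0.
Qed.

End OS.

Theorem corollary6p2 (R : realType) (V : vectType (R[i]))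
    (nrm : forall k, 'M[V]_k -> R) :
  is_operator_space nrm ->
  operator_compact nrm (matrix_unit_ball nrm).
Proof. by move=> H; apply: main_thm. Qed.
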